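(* Let $d,n\ge 1$ and let $\mathbf{X},\mathbf{X}'\in\mathbb{R}^{d\times n}$ be neighboring datasets all of whose columns lie in $\mathcal{B}_d$. Let $\mathbf{\Lambda}=\mathrm{diag}(\lambda_1,\dots,\lambda_d)$ and $\mathbf{\Lambda}'=\mathrm{diag}(\lambda_1',\dots,\lambda_d')$ be the diagonal matrices of eigenvalues (in non-increasing order) of $\mathbf{\Sigma}(\mathbf{X})$ and $\mathbf{\Sigma}(\mathbf{X}')$ respectively. Then $$\|\mathbf{\Lambda}-\mathbf{\Lambda}'\|_F\le \frac{\sqrt{2}}{n}.$$
   Context: $\mathcal{B}_d$ denotes the closed unit $\ell_2$-ball in $\mathbb{R}^d$ centered at the origin. A dataset is a matrix $\mathbf{X}\in\mathbb{R}^{d\times n}$ whose columns $X_1,\dots,X_n$ are the individuals' vectors. Two datasets $\mathbf{X},\mathbf{X}'\in\mathbb{R}^{d\times n}$ are neighbors if they differ in exactly one column. The empirical covariance is $\mathbf{\Sigma}(\mathbf{X})=\frac1n\sum_i X_iX_i^T=\frac1n\mathbf{X}\mathbf{X}^T$. *)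

(* Defs.v *)
From HB Require Import structures.
From mathcomp Require Import all_boot all_order all_algebra.
From mathcomp Require Import reals.
Set Implicit Arguments. Unset Strict Implicit. Unset Printing Implicit Defensive.
Import Order.TTheory GRing.Theory Num.Theory.
Local Open Scope ring_scope.

Definition in_unit_ball {R : realType} {d : nat} (v : 'cV[R]_d) : Prop :=
  \sum_(i < d) (v i 0) ^+ 2 <= 1.

Definition cols_in_ball {R : realType} {d n : nat} (X : 'M[R]_(d, n)) : Prop :=
  forall j : 'I_n, in_unit_ball (col j X).

Definition neighbors {R : realType} {d n : nat} (X X' : 'M[R]_(d, n)) : Prop :=
  exists j : 'I_n, col j X != col j X' /\
    (forall k : 'I_n, k != j -> col k X = col k X').

Definition emp_cov {R : realType} {d n : nat} (X : 'M[R]_(d, n)) : 'M[R]_d :=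
  (n%:R)^-1 *: (X *m X^T).

Definition frob_norm {R : realType} {m n : nat} (A : 'M[R]_(m, n)) : R :=
  Num.sqrt (\sum_(i < m) \sum_(j < n) (A i j) ^+ 2).

Definition sorted_eigenvalues {R : realType} {d : nat} (A : 'M[R]_d)
    (lam : 'I_d -> R) : Prop :=
  char_poly A = \prod_(i < d) ('X - (lam i)%:P) /\
  (forall i j : 'I_d, (i <= j)%N -> lam j <= lam i).

(* Main.v *)
Require Import Defs.
From HB Require Import structures.
From mathcomp Require Import all_boot all_order all_algebra all_fingroup.
From mathcomp Require Import sesquilinear spectral ring lra.
Import Order.TTheory GRing.Theory Num.Theory.
Local Open Scope ring_scope.

Lemma abel_expand (C : comNzRingType) (f : nat -> C) (m i : nat) : (i <= m)%N ->
  f i = f m + \sum_(k < m) (f k - f k.+1) * (i <= k)%N%:R.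
Proof.
elim: m i => [|m IH] i.
  by rewrite leqn0 => /eqP->; rewrite big_ord0 addr0.
rewrite leq_eqVlt => /orP[/eqP->|lt].
  rewrite big1 ?addr0 // => k _.
  by rewrite leqNgt (ltn_ord k) mulr0.
rewrite ltnS in lt; rewrite big_ord_recr /= lt.
rewrite (IH i lt) mulr1.
set S := \sum_(k < m) _.
ring.
Qed.

Lemma topk (C : numDomainType) d (a c : 'I_d -> C) (l : 'I_d) :
  (forall i j : 'I_d, (i <= j)%N -> a j <= a i) ->
  (forall i, 0 <= c i <= 1) -> \sum_i c i = l.+1%:R ->
  \sum_i a i * c i <= \sum_i a i * (i <= l)%N%:R.
Proof.
move=> as_ cb cs.
rewrite -subr_ge0 -sumrB.
have E : \sum_(i < d) (a i * (i <= l)%N%:R - a i * c i)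
   = \sum_(i < d) (a i - a l) * ((i <= l)%N%:R - c i).
  have -> : \sum_(i < d) (a i - a l) * ((i <= l)%N%:R - c i)
     = \sum_(i < d) (a i * (i <= l)%N%:R - a i * c i)
       - a l * \sum_(i < d) ((i <= l)%N%:R - c i).
    rewrite mulr_sumr -sumrB; apply: eq_bigr => i _; by rewrite mulrBl !mulrBr.
  rewrite [\sum_(i < d) (_ - c i)]sumrB cs.
  have -> : \sum_(i < d) ((i <= l)%N%:R : C) = l.+1%:R.
    rewrite -(big_mkord xpredT (fun i : nat => ((i <= l)%N%:R : C))).
    rewrite (big_cat_nat (n:=l.+1)) //=.
    rewrite [X in _ + X = _]big1_seq; last first.
      move=> i /andP[_]; rewrite mem_index_iota => /andP[h _].
      by rewrite leqNgt h.
    rewrite addr0 -natr_sum. congr (_%:R).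
    rewrite big_nat_cond (eq_bigr (fun _ => 1%N)); last first.
      by move=> i /andP[/andP[_ h] _]; rewrite -ltnS h.
    by rewrite -big_nat_cond sum1_size size_iota subn0.
  by rewrite subrr mulr0 subr0.
rewrite E; apply: sumr_ge0 => i _.
case: (leqP i l) => h.
  rewrite mulr_ge0 // ?subr_ge0; first exact: as_.
  by case/andP: (cb i).
rewrite -mulrNN mulr_ge0 // ?opprB ?subr_ge0.
  by apply: as_; apply: ltnW.
by case/andP: (cb i).
Qed.

Lemma rearr (C : numDomainType) d (a b : 'I_d -> C) (S : 'M[C]_d) :
  (forall i j : 'I_d, (i <= j)%N -> a j <= a i) ->
  (forall i j : 'I_d, (i <= j)%N -> b j <= b i) ->
  (forall i j, 0 <= S i j) -> (forall i, \sum_j S i j = 1) ->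
  (forall j, \sum_i S i j = 1) ->
  \sum_i \sum_j a i * b j * S i j <= \sum_i a i * b i.
Proof.
case: d a b S => [|m] a b S ha hb hS hr hc; first by rewrite !big_ord0.
pose b' k := b (inord k).
have hb' : forall j : 'I_m.+1,
    b j = b' m + \sum_(l < m) (b' l - b' l.+1) * (j <= l)%N%:R.
  move=> j; have hj : (j <= m)%N by rewrite -ltnS.
  by rewrite -(@abel_expand _ b' m j hj) /b' inord_val.
pose c (l : 'I_m) (i : 'I_m.+1) := \sum_j S i j * (j <= l)%N%:R.
have inner : forall i, \sum_j S i j * b j
    = b' m + \sum_(l < m) (b' l - b' l.+1) * c l i.
  move=> i.
  under eq_bigr do rewrite hb' mulrDr mulr_sumr.
  rewrite big_split /= -mulr_suml hr mul1r; congr (_ + _).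
  rewrite exchange_big /=; apply: eq_bigr => l _.
  rewrite /c mulr_sumr; apply: eq_bigr => j _.
  by rewrite mulrCA.
have L : \sum_i \sum_j a i * b j * S i j
    = b' m * \sum_i a i + \sum_(l < m) (b' l - b' l.+1) * \sum_i a i * c l i.
  transitivity (\sum_i a i * \sum_j S i j * b j).
    apply: eq_bigr => i _; rewrite mulr_sumr; apply: eq_bigr => j _.
    by rewrite -mulrA [b j * _]mulrC.
  under eq_bigr do rewrite inner mulrDr mulr_sumr.
  rewrite big_split /= mulr_sumr; congr (_ + _).
    by apply: eq_bigr => i _; rewrite mulrC.
  rewrite exchange_big /=; apply: eq_bigr => l _.
  rewrite mulr_sumr; apply: eq_bigr => i _.
  by rewrite mulrCA.
have Rr : \sum_i a i * b i
    = b' m * \sum_i a i + \sum_(l < m) (b' l - b' l.+1) * \sum_i a i * (i <= l)%N%:R.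
  under eq_bigr do rewrite hb' mulrDr mulr_sumr.
  rewrite big_split /= mulr_sumr; congr (_ + _).
    by apply: eq_bigr => i _; rewrite mulrC.
  rewrite exchange_big /=; apply: eq_bigr => l _.
  rewrite mulr_sumr; apply: eq_bigr => i _.
  by rewrite mulrCA.
rewrite L Rr lerD2l; apply: ler_sum => l _; apply: ler_wpM2l.
  rewrite subr_ge0 /b'; apply: hb.
  rewrite !inordK //; last by rewrite ltnS ltnW.
  by rewrite ltnS.
have hl : (l < m.+1)%N by rewrite ltnS ltnW.
apply: (@topk _ _ a (c l) (Ordinal hl)) => //.
  move=> i; rewrite /c; apply/andP; split.
    by apply: sumr_ge0 => j _; rewrite mulr_ge0 // ler0n.
  rewrite -[X in _ <= X](hr i); apply: ler_sum => j _.
  by case: (j <= l)%N; rewrite ?mulr1n ?mulr0n ?mulr1 ?mulr0.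
rewrite /c exchange_big /=.
under eq_bigr do rewrite -mulr_suml hc mul1r.
rewrite -(big_mkord xpredT (fun i : nat => ((i <= l)%N%:R : C))).
rewrite (big_cat_nat (n:=l.+1)) //=.
rewrite [X in _ + X = _]big1_seq; last first.
  move=> i /andP[_]; rewrite mem_index_iota => /andP[h _].
  by rewrite leqNgt h.
rewrite addr0 -natr_sum; congr (_%:R).
rewrite big_nat_cond (eq_bigr (fun _ => 1%N)); last first.
  by move=> i /andP[/andP[_ h] _]; rewrite -ltnS h.
by rewrite -big_nat_cond sum1_size size_iota subn0.
Qed.
Lemma char_poly_conj (F : fieldType) d (P M : 'M[F]_d) : P \in unitmx ->
  char_poly (invmx P *m M *m P) = char_poly M.
Proof.
move=> Pu.
pose f := @map_mx F {poly F} polyC d d.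
have hPP : f (invmx P) *m f P = 1%:M.
  by rewrite /f -map_mxM mulVmx // map_mx1.
have E : char_poly_mx (invmx P *m M *m P)
    = f (invmx P) *m char_poly_mx M *m f P.
  rewrite /char_poly_mx mulmxBr mulmxBl map_mxM map_mxM -/f.
  congr (_ - _).
  by rewrite mul_mx_scalar -scalemxAl hPP scalemx1.
rewrite /char_poly E !det_mulmx mulrAC -det_mulmx hPP det1 mul1r //.
Qed.

Lemma char_poly_diag (F : fieldType) d (D : 'rV[F]_d) :
  char_poly (diag_mx D) = \prod_i ('X - (D 0 i)%:P).
Proof.
rewrite char_poly_trig ?diag_mx_is_trig //.
by apply: eq_bigr => i _; rewrite mxE eqxx mulr1n.
Qed.

Lemma prod_perm (F : fieldType) d (a b : 'I_d -> F) :
  \prod_i ('X - (a i)%:P) = \prod_i ('X - (b i)%:P) ->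
  exists s : 'S_d, forall i, b i = a (s i).
Proof.
move=> E.
have pe : perm_eq [tuple b i | i < d] [tuple a i | i < d].
  apply: prod_XsubC_eq. rewrite /= !big_map. exact: (esym E).
have [p hp] := tuple_permP pe.
exists p => i.
by have := congr1 (fun t => tnth t i) (val_inj hp); rewrite !tnth_mktuple.
Qed.

Local Open Scope sesquilinear_scope.

Lemma decomp (C : numClosedFieldType) d (A : 'M[C]_d) (a : 'I_d -> C) :
  A \is normalmx -> char_poly A = \prod_i ('X - (a i)%:P) ->
  exists (P : 'M[C]_d) (s : 'S_d),
    P \is unitarymx /\ A = P^t* *m diag_mx (\row_i a (s i)) *m P.
Proof.
move=> /orthomx_spectralP hA hc.
have Pu := spectral_unitarymx A.
have : char_poly A = \prod_i ('X - (spectral_diag A 0 i)%:P).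
  by rewrite {1}hA char_poly_conj ?char_poly_diag // spectral_unit.
rewrite hc => /prod_perm [s hs].
exists (spectralmx A), s; split => //.
rewrite {1}hA invmx_unitary //; congr (_ *m _ *m _); congr diag_mx.
by apply/rowP => i; rewrite mxE hs.
Qed.

Lemma tr_formula (C : numClosedFieldType) d (P Q : 'M[C]_d) (D E : 'rV[C]_d) :
  \tr ((P^t* *m diag_mx D *m P) *m (Q^t* *m diag_mx E *m Q)) =
  \sum_i \sum_j D 0 i * E 0 j * ((P *m Q^t*) i j * ((P *m Q^t*) i j)^*).
Proof.
set W := P *m Q^t*.
have hW : W^t* = Q *m P^t*.
  by rewrite /W trmx_mul map_mxM trmxCK.
have -> : (P^t* *m diag_mx D *m P) *m (Q^t* *m diag_mx E *m Q)
    = P^t* *m (diag_mx D *m P *m Q^t* *m diag_mx E *m Q) by rewrite !mulmxA.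
rewrite mxtrace_mulC.
have -> : diag_mx D *m P *m Q^t* *m diag_mx E *m Q *m P^t*
    = diag_mx D *m W *m diag_mx E *m W^t* by rewrite hW /W !mulmxA.
rewrite /mxtrace; apply: eq_bigr => i _.
rewrite mxE; apply: eq_bigr => j _.
rewrite mul_mx_diag mul_diag_mx !mxE.
by ring.
Qed.

Lemma unitary_rows (C : numClosedFieldType) d (W : 'M[C]_d) :
  W \is unitarymx -> forall i, \sum_j W i j * (W i j)^* = 1.
Proof.
move=> /unitarymxP hW i.
have := congr1 (fun M : 'M[C]_d => M i i) hW.
by rewrite /= !mxE eqxx mulr1n => <-; apply: eq_bigr => j _; rewrite !mxE.
Qed.

Lemma unitary_cols (C : numClosedFieldType) d (W : 'M[C]_d) :
  W \is unitarymx -> forall j, \sum_i W i j * (W i j)^* = 1.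
Proof.
rewrite -trmxC_unitary => /unitarymxP hW j.
have := congr1 (fun M : 'M[C]_d => M j j) hW.
rewrite trmxCK /= !mxE eqxx mulr1n => <-; apply: eq_bigr => i _.
by rewrite !mxE mulrC.
Qed.

Lemma HW_C (C : numClosedFieldType) d (A B : 'M[C]_d) (a b : 'I_d -> C) :
  A \is normalmx -> B \is normalmx ->
  char_poly A = \prod_i ('X - (a i)%:P) ->
  char_poly B = \prod_i ('X - (b i)%:P) ->
  (forall i j : 'I_d, (i <= j)%N -> a j <= a i) ->
  (forall i j : 'I_d, (i <= j)%N -> b j <= b i) ->
  \tr (A *m B) <= \sum_i a i * b i.
Proof.
move=> nA nB cA cB sa sb.
have [P [s [Pu hA]]] := @decomp _ _ _ _ nA cA.
have [Q [t [Qu hB]]] := @decomp _ _ _ _ nB cB.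
rewrite hA hB tr_formula.
set W := P *m Q^t*.
have Wu : W \is unitarymx by rewrite mul_unitarymx ?trmxC_unitary.
pose S i j := W i j * (W i j)^*.
pose S' : 'M[C]_d := \matrix_(i, j) S (s^-1 i)%g (t^-1 j)%g.
have -> : \sum_i \sum_j (\row_i0 a (s i0)) 0 i * (\row_i0 b (t i0)) 0 j * S i j
    = \sum_i \sum_j a i * b j * S' i j.
  rewrite [RHS](reindex_inj (@perm_inj _ s)); apply: eq_bigr => i _.
  rewrite [RHS](reindex_inj (@perm_inj _ t)); apply: eq_bigr => j _.
  by rewrite /S' !mxE !permK.
apply: rearr => //.
- by move=> i j; rewrite /S' mxE /S mul_conjC_ge0.
- move=> i; rewrite /S' (reindex_inj (@perm_inj _ t)).
  under eq_bigr do rewrite mxE permK.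
  exact: unitary_rows.
- move=> j; rewrite /S' (reindex_inj (@perm_inj _ s)).
  under eq_bigr do rewrite mxE permK.
  exact: unitary_cols.
Qed.

Lemma trsq_C (C : numClosedFieldType) d (A : 'M[C]_d) (a : 'I_d -> C) :
  A \is normalmx -> char_poly A = \prod_i ('X - (a i)%:P) ->
  \tr (A *m A) = \sum_i a i * a i.
Proof.
move=> nA cA.
have [P [s [Pu hA]]] := @decomp _ _ _ _ nA cA.
rewrite hA tr_formula.
have -> : P *m P^t* = 1%:M by apply/unitarymxP.
rewrite [RHS](reindex_inj (@perm_inj _ s)); apply: eq_bigr => i _.
rewrite (bigD1 i) //= big1 ?addr0.
  by rewrite !mxE eqxx mulr1n conjC1 !mulr1.
by move=> j /negbTE ij; rewrite !mxE eq_sym ij mulr0n mul0r mulr0.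
Qed.

From mathcomp Require Import reals.
From mathcomp.real_closed Require Import complex.

Lemma HW_R (R : realType) d (A B : 'M[R]_d) (a b : 'I_d -> R) :
  A^T = A -> B^T = B ->
  char_poly A = \prod_i ('X - (a i)%:P) ->
  char_poly B = \prod_i ('X - (b i)%:P) ->
  (forall i j : 'I_d, (i <= j)%N -> a j <= a i) ->
  (forall i j : 'I_d, (i <= j)%N -> b j <= b i) ->
  \tr (A *m B) <= \sum_i a i * b i /\ \tr (A *m A) = \sum_i a i * a i.
Proof.
move=> sA sB cA cB sa sb.
pose f := real_complex R.
have norm : forall M : 'M[R]_d, M^T = M -> map_mx f M \is normalmx.
  move=> M sM; apply: hermitian_normalmx; apply: realsym_hermsym.
    rewrite is_hermitianmxE expr0 scale1r map_mx_id // map_trmx sM //.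
  by apply/mxOverP => i j; apply/complex_realP; exists (M i j); rewrite mxE.
have cp : forall (M : 'M[R]_d) (c : 'I_d -> R),
    char_poly M = \prod_i ('X - (c i)%:P) ->
    char_poly (map_mx f M) = \prod_i ('X - (f (c i))%:P).
  by move=> M c cM; rewrite -map_char_poly cM map_prod_XsubC.
have so : forall c : 'I_d -> R, (forall i j : 'I_d, (i <= j)%N -> c j <= c i) ->
    (forall i j : 'I_d, (i <= j)%N -> f (c j) <= f (c i)).
  by move=> c sc i j ij; rewrite /f lecR; apply: sc.
split.
  have := @HW_C _ _ _ _ _ _ (norm A sA) (norm B sB) (cp A a cA) (cp B b cB) (so a sa) (so b sb).
  rewrite -map_mxM trace_map_mx.
  under eq_bigr do rewrite -rmorphM.
  by rewrite -rmorph_sum /f lecR.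
have := @trsq_C _ _ _ _ (norm A sA) (cp A a cA).
rewrite -map_mxM trace_map_mx.
under eq_bigr do rewrite -rmorphM.
by rewrite -rmorph_sum; apply: complexI.
Qed.

Lemma sum_sq (R : comNzRingType) d (F : 'I_d -> R) :
  \sum_a \sum_b F a * F b = (\sum_a F a) ^+ 2.
Proof. by rewrite expr2 mulr_suml; apply: eq_bigr => a _; rewrite mulr_sumr. Qed.

Lemma diff_entry (R : realType) d n (X X' : 'M[R]_(d, n)) (j : 'I_n) :
  (forall k : 'I_n, k != j -> col k X = col k X') ->
  forall a b, (X *m X^T - X' *m X'^T) a b = X a j * X b j - X' a j * X' b j.
Proof.
move=> hc a b; rewrite !mxE (bigD1 j) //= [X in _ - X](bigD1 j) //= !mxE.
have -> : \sum_(i < n | i != j) X a i * X^T i b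
        = \sum_(i < n | i != j) X' a i * X'^T i b.
  apply: eq_bigr => k kj; rewrite !mxE.
  have := congr1 (fun M : 'M[R]_(d,1) => M a 0) (hc k kj); have := congr1 (fun M : 'M[R]_(d,1) => M b 0) (hc k kj).
  by rewrite !mxE => -> ->.
by rewrite opprD addrACA subrr addr0.
Qed.

Lemma trN2 (R : realType) d n (X X' : 'M[R]_(d, n)) (j : 'I_n) :
  (forall k : 'I_n, k != j -> col k X = col k X') ->
  in_unit_ball (col j X) -> in_unit_ball (col j X') ->
  \tr ((X *m X^T - X' *m X'^T) *m (X *m X^T - X' *m X'^T)) <= 2.
Proof.
move=> hc bu bv; set N := X *m X^T - X' *m X'^T.
pose u a := X a j; pose v a := X' a j.
have hN : forall a b, N a b = u a * u b - v a * v b by exact: diff_entry.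
have -> : \tr (N *m N) = (\sum_a u a * u a) ^+ 2 + (\sum_a v a * v a) ^+ 2
    - 2 * (\sum_a u a * v a) ^+ 2.
  rewrite -!sum_sq /mxtrace -big_split mulr_sumr -sumrB /=.
  apply: eq_bigr => a _.
  rewrite mxE -big_split mulr_sumr -sumrB /=; apply: eq_bigr => b _.
  rewrite !hN; ring.
have su : \sum_a u a * u a <= 1.
  move: bu; rewrite /in_unit_ball; under eq_bigr do rewrite mxE expr2; done.
have sv : \sum_a v a * v a <= 1.
  move: bv; rewrite /in_unit_ball; under eq_bigr do rewrite mxE expr2; done.
have su0 : 0 <= \sum_a u a * u a by apply: sumr_ge0 => a _; rewrite -expr2 sqr_ge0.
have sv0 : 0 <= \sum_a v a * v a by apply: sumr_ge0 => a _; rewrite -expr2 sqr_ge0.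
set p := \sum_a u a * u a in su su0 *; set q := \sum_a v a * v a in sv sv0 *.
set r := \sum_a u a * v a.
have : 0 <= r ^+ 2 by apply: sqr_ge0.
nra.
Qed.

Theorem mainTheorem1 (R : realType) (d n : nat) (hd : (0 < d)%N) (hn : (0 < n)%N)
    (X X' : 'M[R]_(d, n)) (lam lam' : 'I_d -> R) :
  cols_in_ball X -> cols_in_ball X' -> neighbors X X' ->
  sorted_eigenvalues (emp_cov X) lam ->
  sorted_eigenvalues (emp_cov X') lam' ->
  frob_norm (diag_mx (\row_i lam i) - diag_mx (\row_i lam' i))
    <= Num.sqrt 2 / n%:R.
Proof.
move=> bX bX' [j [_ hc]] [cA sa] [cB sb].
have sym : forall Y : 'M[R]_(d, n), (emp_cov Y)^T = emp_cov Y.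
  by move=> Y; rewrite /emp_cov linearZ /= trmx_mul trmxK.
have [hAB hAA] := @HW_R _ _ _ _ _ _ (sym X) (sym X') cA cB sa sb.
have [_ hBB] := @HW_R _ _ _ _ _ _ (sym X') (sym X') cB cB sb sb.
set A := emp_cov X in hAB hAA; set B := emp_cov X' in hAB hBB.
have hN := @trN2 _ _ _ _ _ _ hc (bX j) (bX' j).
have nR : (0 < n%:R :> R) by rewrite ltr0n.
have AB : A - B = n%:R^-1 *: (X *m X^T - X' *m X'^T).
  by rewrite /A /B /emp_cov scalerBr.
have key : \sum_i (lam i - lam' i) ^+ 2 <= \tr ((A - B) *m (A - B)).
  have -> : \tr ((A - B) *m (A - B))
      = \tr (A *m A) + \tr (B *m B) - 2 * \tr (A *m B).
    rewrite mulmxBl !mulmxBr !linearB /= [\tr (B *m A)]mxtrace_mulC; ring.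
  rewrite hAA hBB.
  have -> : \sum_i (lam i - lam' i) ^+ 2
      = \sum_i lam i * lam i + \sum_i lam' i * lam' i
        - 2 * \sum_i lam i * lam' i.
    rewrite mulr_sumr -big_split -sumrB /=; apply: eq_bigr => i _; ring.
  by rewrite lerD2l lerN2 ler_wpM2l.
have tr2 : \tr ((A - B) *m (A - B)) <= 2 / n%:R ^+ 2.
  rewrite AB -scalemxAl -scalemxAr !mxtraceZ mulrA -expr2 exprVn mulrC.
  by rewrite ler_wpM2r // invr_ge0 exprn_ge0 // ltW.
have fr : frob_norm (diag_mx (\row_i lam i) - diag_mx (\row_i lam' i))
    = Num.sqrt (\sum_i (lam i - lam' i) ^+ 2).
  rewrite /frob_norm; congr Num.sqrt; apply: eq_bigr => i _.
  rewrite (bigD1 i) //= big1 ?addr0.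
    by rewrite !mxE eqxx !mulr1n.
  by move=> k /negbTE ki; rewrite !mxE eq_sym ki !mulr0n subrr expr0n.
rewrite fr.
have -> : Num.sqrt (2 : R) / n%:R = Num.sqrt (2 / n%:R ^+ 2).
  rewrite sqrtrM ?ler0n // sqrtrV ?exprn_ge0 ?ler0n //.
  by rewrite sqrtr_sqr ger0_norm // ltW.
rewrite ler_sqrt; last by rewrite divr_ge0 // ?exprn_ge0 // ltW.
exact: le_trans key tr2.
Qed.
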